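(* Let $(R,1_R)$ be an Archimedean unital Riesz space and $M$ a pseudo MV-algebra. If $s_1,s_2$ are $(R,1_R)$-state-morphisms on $M$ whose kernels are maximal ideals of $M$ and $\mathrm{Ker}(s_1)=\mathrm{Ker}(s_2)$, then $s_1=s_2$.
   Context: Pseudo MV-algebra: an algebra $(M;\oplus,{}^-,{}^\sim,0,1)$, $0\neq1$, satisfying the standard pseudo MV-algebra axioms; equivalently (up to isomorphism) $M=\Gamma(G,u)=[0,u]$ for a unital $\ell$-group $(G,u)$ with $x\oplus y=(x+y)\wedge u$, $x^-=u-x$, $x^\sim=-x+u$. Ideal: nonempty down-set closed under $\oplus$; maximal = maximal among proper ideals. A unital Riesz space $(R,1_R)$ is a Riesz space with a fixed strong unit $1_R$; Archimedean if $na\le b$ for all $n\ge1$ implies $a\le0$. $\Gamma(R,1_R)$ is the MV-algebra on $[0,1_R]$. An $(R,1_R)$-state-morphism on $M$ is a homomorphism of pseudo MV-algebras $M\to\Gamma(R,1_R)$; its kernel is $\mathrm{Ker}(s)=\{x:s(x)=0\}$. *)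

(* Defs.v *)
From Stdlib Require Import Reals.
Open Scope R_scope.

Record PseudoMV := {
  pcar :> Type;
  poplus : pcar -> pcar -> pcar;
  pminus : pcar -> pcar;
  ptilde : pcar -> pcar;
  pzero : pcar;
  pone : pcar;
  pzero_neq_one : pzero <> pone;
  pA1 : forall x y z, poplus x (poplus y z) = poplus (poplus x y) z;
  pA2 : forall x, poplus x pzero = x /\ poplus pzero x = x;
  pA3 : forall x, poplus x pone = pone /\ poplus pone x = pone;
  pA4 : ptilde pone = pzero /\ pminus pone = pzero;
  pA5 : forall x y,
      ptilde (poplus (pminus x) (pminus y)) = pminus (poplus (ptilde x) (ptilde y));
  pA6 : forall x y,
      let odot := fun a b => ptilde (poplus (pminus a) (pminus b)) in
      poplus x (odot (ptilde x) y) = poplus y (odot (ptilde y) x) /\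
      poplus y (odot (ptilde y) x) = poplus (odot x (pminus y)) y /\
      poplus (odot x (pminus y)) y = poplus (odot y (pminus x)) x;
  pA7 : forall x y,
      let odot := fun a b => ptilde (poplus (pminus a) (pminus b)) in
      odot x (poplus (pminus x) y) = odot (poplus x (ptilde y)) y;
  pA8 : forall x, ptilde (pminus x) = x
}.

Definition ple (M : PseudoMV) (x y : M) : Prop := poplus M (pminus M x) y = pone M.

Definition is_ideal (M : PseudoMV) (I : M -> Prop) : Prop :=
  (exists x, I x) /\
  (forall x y, I y -> ple M x y -> I x) /\
  (forall x y, I x -> I y -> I (poplus M x y)).

Definition is_maximal_ideal (M : PseudoMV) (I : M -> Prop) : Prop :=
  is_ideal M I /\ (exists x, ~ I x) /\
  (forall J : M -> Prop, is_ideal M J -> (exists x, ~ J x) ->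
     (forall x, I x -> J x) -> forall x, J x -> I x).

Record RieszSpace := {
  rcar :> Type;
  radd : rcar -> rcar -> rcar;
  ropp : rcar -> rcar;
  rzero : rcar;
  rscal : R -> rcar -> rcar;
  rle : rcar -> rcar -> Prop;
  rmeet : rcar -> rcar -> rcar;
  rjoin : rcar -> rcar -> rcar;
  radd_assoc : forall x y z, radd x (radd y z) = radd (radd x y) z;
  radd_comm : forall x y, radd x y = radd y x;
  radd_0 : forall x, radd x rzero = x;
  radd_opp : forall x, radd x (ropp x) = rzero;
  rscal_assoc : forall a b x, rscal a (rscal b x) = rscal (a * b) x;
  rscal_1 : forall x, rscal 1 x = x;
  rscal_distr_r : forall a x y, rscal a (radd x y) = radd (rscal a x) (rscal a y);
  rscal_distr_l : forall a b x, rscal (a + b) x = radd (rscal a x) (rscal b x);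
  rle_refl : forall x, rle x x;
  rle_antisym : forall x y, rle x y -> rle y x -> x = y;
  rle_trans : forall x y z, rle x y -> rle y z -> rle x z;
  rle_add : forall x y z, rle x y -> rle (radd x z) (radd y z);
  rle_scal : forall a x, 0 <= a -> rle rzero x -> rle rzero (rscal a x);
  rmeet_glb : forall x y z, rle z (rmeet x y) <-> (rle z x /\ rle z y);
  rjoin_lub : forall x y z, rle (rjoin x y) z <-> (rle x z /\ rle y z)
}.

Definition rsub (V : RieszSpace) (x y : V) : V := radd V x (ropp V y).

Definition strong_unit (V : RieszSpace) (u : V) : Prop :=
  rle V (rzero V) u /\ forall x : V, exists n : nat, rle V x (rscal V (INR n) u).

Definition archimedean (V : RieszSpace) : Prop :=
  forall a b : V, (forall n : nat, (1 <= n)%nat -> rle V (rscal V (INR n) a) b) ->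
    rle V a (rzero V).

(* (R,1_R)-state-morphism: a pseudo MV-homomorphism M -> Gamma(R,1_R), where
   Gamma(R,1_R) = [0,1_R] with x (+) y = (x+y) /\ 1_R, x^- = x^~ = 1_R - x. *)
Definition state_morphism (M : PseudoMV) (V : RieszSpace) (u : V) (s : M -> V) : Prop :=
  (forall x, rle V (rzero V) (s x) /\ rle V (s x) u) /\
  (forall x y, s (poplus M x y) = rmeet V (radd V (s x) (s y)) u) /\
  (forall x, s (pminus M x) = rsub V u (s x)) /\
  (forall x, s (ptilde M x) = radd V (ropp V (s x)) u) /\
  s (pzero M) = rzero V /\
  s (pone M) = u.

Definition Ker (M : PseudoMV) (V : RieszSpace) (s : M -> V) : M -> Prop :=
  fun x => s x = rzero V.

(* Main.v *)
Require Import Defs.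
From Stdlib Require Import Reals Lra Classical FunctionalExtensionality.
Open Scope R_scope.

Local Infix "⊞" := (radd _) (at level 50, left associativity).
Local Notation "⊟ x" := (ropp _ x) (at level 35, right associativity).
Local Infix "≼" := (rle _) (at level 70).
Local Infix "⊓" := (rmeet _) (at level 40, left associativity).
Local Notation "t ⋅ x" := (rscal _ t x) (at level 40, left associativity).

Lemma add0l (V : RieszSpace) (x : V) : rzero V ⊞ x = x.
Proof. rewrite radd_comm; apply radd_0. Qed.
Lemma addNl (V : RieszSpace) (x : V) : ⊟ x ⊞ x = rzero V.
Proof. rewrite radd_comm; apply radd_opp. Qed.
Lemma addKr (V : RieszSpace) (x y : V) : x ⊞ y ⊞ ⊟ y = x.
Proof. rewrite <- radd_assoc, radd_opp; apply radd_0. Qed.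
Lemma addNKr (V : RieszSpace) (x y : V) : x ⊞ ⊟ y ⊞ y = x.
Proof. rewrite <- radd_assoc, addNl; apply radd_0. Qed.
Lemma add_cancel (V : RieszSpace) (x y z : V) : x ⊞ z = y ⊞ z -> x = y.
Proof. intro H. rewrite <- (addKr V x z), H. apply addKr. Qed.
Lemma opp_unique (V : RieszSpace) (x y : V) : x ⊞ y = rzero V -> y = ⊟ x.
Proof. intro H. rewrite <- (add0l V y), <- (addNl V x), <- radd_assoc, H. apply radd_0. Qed.
Lemma opp_opp (V : RieszSpace) (x : V) : ⊟ ⊟ x = x.
Proof. symmetry. apply opp_unique. apply addNl. Qed.
Lemma swap4 (V : RieszSpace) (a b c d : V) : (a ⊞ b) ⊞ (c ⊞ d) = (a ⊞ c) ⊞ (b ⊞ d).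
Proof. rewrite !radd_assoc. f_equal. rewrite <- !radd_assoc. f_equal. apply radd_comm. Qed.
Lemma opp_add (V : RieszSpace) (x y : V) : ⊟ (x ⊞ y) = ⊟ x ⊞ ⊟ y.
Proof. symmetry. apply opp_unique. rewrite swap4, !radd_opp. apply radd_0. Qed.
Lemma opp0 (V : RieszSpace) : ⊟ rzero V = rzero V.
Proof. symmetry. apply opp_unique. apply radd_0. Qed.

Lemma le_add2r (V : RieszSpace) (x y z : V) : x ≼ y <-> x ⊞ z ≼ y ⊞ z.
Proof. split; intro H. apply rle_add; auto.
  rewrite <- (addKr V x z), <- (addKr V y z). apply rle_add; auto. Qed.
Lemma le_add2l (V : RieszSpace) (x y z : V) : x ≼ y -> z ⊞ x ≼ z ⊞ y.
Proof. intro H. rewrite (radd_comm V z x), (radd_comm V z y). apply rle_add; auto. Qed.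
Lemma le_add2 (V : RieszSpace) (a b c d : V) : a ≼ b -> c ≼ d -> a ⊞ c ≼ b ⊞ d.
Proof. intros H1 H2. apply rle_trans with (b ⊞ c). apply rle_add; auto. apply le_add2l; auto. Qed.
Lemma le_sub0 (V : RieszSpace) (x y : V) : x ≼ y <-> rzero V ≼ y ⊞ ⊟ x.
Proof. split; intro H.
  rewrite <- (radd_opp V x). apply rle_add; auto.
  apply (le_add2r V _ _ x) in H. rewrite add0l, addNKr in H. auto. Qed.
Lemma le_opp (V : RieszSpace) (x y : V) : x ≼ y -> ⊟ y ≼ ⊟ x.
Proof. intro H. apply le_sub0. rewrite opp_opp. apply le_sub0 in H.
  rewrite radd_comm. auto. Qed.

Lemma meet_l (V : RieszSpace) (x y : V) : x ⊓ y ≼ x.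
Proof. apply (proj1 (rmeet_glb V x y (x ⊓ y)) (rle_refl V _)). Qed.
Lemma meet_r (V : RieszSpace) (x y : V) : x ⊓ y ≼ y.
Proof. apply (proj1 (rmeet_glb V x y (x ⊓ y)) (rle_refl V _)). Qed.
Lemma meet_glb' (V : RieszSpace) (x y z : V) : z ≼ x -> z ≼ y -> z ≼ x ⊓ y.
Proof. intros; apply rmeet_glb; auto. Qed.
Lemma meet_eql (V : RieszSpace) (x y : V) : x ≼ y -> x ⊓ y = x.
Proof. intro H. apply rle_antisym. apply meet_l. apply meet_glb'; auto. apply rle_refl. Qed.
Lemma meet_eqr (V : RieszSpace) (x y : V) : y ≼ x -> x ⊓ y = y.
Proof. intro H. apply rle_antisym. apply meet_r. apply meet_glb'; auto. apply rle_refl. Qed.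
Lemma meet_comm (V : RieszSpace) (x y : V) : x ⊓ y = y ⊓ x.
Proof. apply rle_antisym; apply meet_glb'; (apply meet_l || apply meet_r). Qed.
Lemma meet_add (V : RieszSpace) (x y w : V) : (x ⊞ w) ⊓ (y ⊞ w) = (x ⊓ y) ⊞ w.
Proof. apply rle_antisym.
  - apply le_add2r with (z := ⊟ w). rewrite addKr. apply meet_glb'.
    + apply le_add2r with (z := w). rewrite addNKr. apply meet_l.
    + apply le_add2r with (z := w). rewrite addNKr. apply meet_r.
  - apply meet_glb'; apply rle_add; (apply meet_l || apply meet_r). Qed.

Lemma scal0v (V : RieszSpace) (x : V) : 0 ⋅ x = rzero V.
Proof. assert (H := rscal_distr_l V 0 0 x). rewrite Rplus_0_l in H.
  symmetry. apply add_cancel with (z := 0 ⋅ x). rewrite add0l. auto. Qed.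
Lemma scal_v0 (V : RieszSpace) (t : R) : t ⋅ rzero V = rzero V.
Proof. assert (H := rscal_distr_r V t (rzero V) (rzero V)). rewrite radd_0 in H.
  symmetry. apply add_cancel with (z := t ⋅ rzero V). rewrite add0l. auto. Qed.
Lemma scal_opp (V : RieszSpace) (t : R) (x : V) : t ⋅ (⊟ x) = ⊟ (t ⋅ x).
Proof. apply opp_unique. rewrite <- rscal_distr_r, radd_opp. apply scal_v0. Qed.
Lemma scal_le (V : RieszSpace) (t : R) (x y : V) : 0 <= t -> x ≼ y -> t ⋅ x ≼ t ⋅ y.
Proof. intros Ht H. apply le_sub0 in H. apply le_sub0.
  rewrite <- scal_opp, <- rscal_distr_r. apply rle_scal; auto. Qed.
Lemma scal2 (V : RieszSpace) (x : V) : 2 ⋅ x = x ⊞ x.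
Proof. replace 2 with (1 + 1) by lra. rewrite rscal_distr_l, rscal_1. auto. Qed.
Lemma scal_le1 (V : RieszSpace) (t : R) (u : V) : 0 <= t <= 1 -> rzero V ≼ u -> t ⋅ u ≼ u.
Proof. intros Ht Hu. rewrite <- (rscal_1 V u) at 2. replace 1 with (t + (1 - t)) by lra.
  rewrite rscal_distr_l. rewrite <- (radd_0 V (t ⋅ u)) at 1. apply le_add2l.
  rewrite <- (scal_v0 V (1 - t)). apply scal_le; auto; lra. Qed.
Definition wt (M : PseudoMV) (y z : M) : M :=
  ptilde M (poplus M (pminus M y) (pminus M (pminus M z))).

Lemma sm_w (M : PseudoMV) (V : RieszSpace) (u : V) (s : M -> V) :
  state_morphism M V u s -> forall y z, s (wt M y z) = s y ⊞ ⊟ (s y ⊓ s z).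
Proof.
  intros (Hb & Ho & Hm & Ht & H0 & H1) y z. unfold wt.
  rewrite Ht, Ho, !Hm. unfold rsub.
  set (A := s y). set (B := s z).
  replace (u ⊞ ⊟ (u ⊞ ⊟ B)) with B
    by (rewrite opp_add, opp_opp, radd_assoc, radd_opp; symmetry; apply add0l).
  set (X := u ⊞ ⊟ A).
  assert (Hu : A ⊞ X = u) by (unfold X; rewrite radd_comm; apply addNKr).
  replace ((X ⊞ B) ⊓ u) with ((B ⊞ X) ⊓ (A ⊞ X)) by (rewrite Hu, radd_comm; auto).
  rewrite meet_add, opp_add.
  rewrite <- Hu. rewrite <- radd_assoc, (radd_comm V A X), (radd_assoc V (⊟ X) X A), addNl, add0l.
  rewrite radd_comm, meet_comm. auto.
Qed.

Lemma w_zero_iff (V : RieszSpace) (A B : V) : A ⊞ ⊟ (A ⊓ B) = rzero V <-> A ≼ B.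
Proof. split; intro H.
  - assert (E : A = A ⊓ B) by (apply add_cancel with (z := ⊟ (A ⊓ B)); rewrite radd_opp; auto).
    rewrite E. apply meet_r.
  - rewrite meet_eql; auto. apply radd_opp. Qed.

Lemma sm_le (M : PseudoMV) (V : RieszSpace) (u : V) (s : M -> V) :
  state_morphism M V u s -> forall x y, ple M x y -> s x ≼ s y.
Proof.
  intros Hs x y Hp. pose proof Hs as (Hb & Ho & Hm & Ht & H0 & H1).
  unfold ple in Hp. apply (f_equal s) in Hp. rewrite Ho, Hm, H1 in Hp. unfold rsub in Hp.
  assert (Hl : u ≼ u ⊞ ⊟ s x ⊞ s y) by (rewrite <- Hp at 1; apply meet_l).
  apply le_sub0. apply (le_add2r V _ _ u). rewrite add0l.
  replace (s y ⊞ ⊟ s x ⊞ u) with (u ⊞ ⊟ s x ⊞ s y); auto.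
  rewrite <- radd_assoc, (radd_comm V u). f_equal. apply radd_comm.
Qed.

Lemma sm_zero_all (M : PseudoMV) (V : RieszSpace) (u : V) (s : M -> V) :
  state_morphism M V u s -> is_maximal_ideal M (Ker M V s) -> u <> rzero V.
Proof.
  intros (Hb & _) (_ & (x & Hx) & _) E. apply Hx. unfold Ker.
  destruct (Hb x). subst u. apply rle_antisym; auto.
Qed.

Lemma max_arch (M : PseudoMV) (V : RieszSpace) (u : V) (s : M -> V) :
  state_morphism M V u s -> is_maximal_ideal M (Ker M V s) ->
  forall y, s y <> rzero V -> exists n, u ≼ INR n ⋅ s y.
Proof.
  intros Hs Hmax y Hy. pose proof Hs as (Hb & Ho & Hm & Ht & H0 & H1).
  destruct Hmax as (_ & _ & Hmax).
  set (J := fun z => exists n, s z ≼ INR n ⋅ s y).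
  assert (HJ : is_ideal M J).
  { split; [|split].
    - exists (pzero M). exists 0%nat. rewrite H0. simpl. rewrite scal0v. apply rle_refl.
    - intros a b (n & Hn) Hab. exists n. apply rle_trans with (s b); auto.
      eapply sm_le; eauto.
    - intros a b (n & Hn) (m & Hm'). exists (n + m)%nat. rewrite Ho, plus_INR, rscal_distr_l.
      apply rle_trans with (s a ⊞ s b). apply meet_l. apply le_add2; auto. }
  assert (HK : forall x, Ker M V s x -> J x).
  { intros x Hx. exists 0%nat. unfold Ker in Hx. rewrite Hx. simpl. rewrite scal0v. apply rle_refl. }
  destruct (classic (exists x, ~ J x)) as [Hp | Hp].
  - exfalso. apply Hy. apply (Hmax J HJ Hp HK). exists 1%nat. simpl. rewrite rscal_1. apply rle_refl.
  - destruct (classic (J (pone M))) as [(n & Hn) | Hn].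
    + exists n. rewrite <- H1. auto.
    + exfalso. apply Hp. eauto.
Qed.


Lemma scal_mono_t (V : RieszSpace) (P : V) (t1 t2 : R) :
  rzero V ≼ P -> 0 <= t1 <= t2 -> t1 ⋅ P ≼ t2 ⋅ P.
Proof. intros HP Ht. replace t2 with (t1 + (t2 - t1)) by lra. rewrite rscal_distr_l.
  rewrite <- (radd_0 V (t1 ⋅ P)) at 1. apply le_add2l.
  rewrite <- (scal_v0 V (t2 - t1)). apply scal_le; auto; lra. Qed.

Lemma meet_scal_le (V : RieszSpace) (t : R) (x y : V) : 0 < t -> (t ⋅ x) ⊓ (t ⋅ y) ≼ t ⋅ (x ⊓ y).
Proof. intro Ht. set (W := (t ⋅ x) ⊓ (t ⋅ y)).
  assert (E : W = t ⋅ ((/ t) ⋅ W)) by (rewrite rscal_assoc, Rinv_r, rscal_1; auto; lra).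
  rewrite E. apply scal_le; [lra|]. apply meet_glb'.
  - rewrite <- (rscal_1 V x), <- (Rinv_l t) by lra. rewrite <- rscal_assoc.
    apply scal_le. left. apply Rinv_0_lt_compat; auto. apply meet_l.
  - rewrite <- (rscal_1 V y), <- (Rinv_l t) by lra. rewrite <- rscal_assoc.
    apply scal_le. left. apply Rinv_0_lt_compat; auto. apply meet_r.
Qed.

Lemma sm_linear (M : PseudoMV) (V : RieszSpace) (u : V) (s : M -> V) :
  state_morphism M V u s -> is_maximal_ideal M (Ker M V s) ->
  forall y z, s y ≼ s z \/ s z ≼ s y.
Proof.
  intros Hs Hmax y z. pose proof Hs as (Hb & _).
  pose proof (sm_w M V u s Hs y z) as E1. pose proof (sm_w M V u s Hs z y) as E2.
  rewrite (meet_comm V (s z)) in E2.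
  set (A := s y) in *. set (B := s z) in *. set (m := A ⊓ B) in *.
  destruct (classic (A ⊞ ⊟ m = rzero V)) as [HP | HP].
  { left. apply w_zero_iff; auto. }
  destruct (classic (B ⊞ ⊟ m = rzero V)) as [HQ | HQ].
  { right. apply w_zero_iff. rewrite meet_comm; auto. }
  exfalso.
  destruct (max_arch M V u s Hs Hmax (wt M y z)) as (n & Hn). { rewrite E1; auto. }
  destruct (max_arch M V u s Hs Hmax (wt M z y)) as (k & Hk). { rewrite E2; auto. }
  rewrite E1 in Hn. rewrite E2 in Hk.
  set (N := INR n + INR k + 1).
  assert (Hn0 := pos_INR n). assert (Hk0 := pos_INR k).
  assert (P0 : rzero V ≼ A ⊞ ⊟ m) by (apply (proj1 (le_sub0 V m A)); apply meet_l).
  assert (Q0 : rzero V ≼ B ⊞ ⊟ m) by (apply (proj1 (le_sub0 V m B)); apply meet_r).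
  assert (H1 : u ≼ N ⋅ (A ⊞ ⊟ m)).
  { apply rle_trans with (1 := Hn). apply scal_mono_t; auto. unfold N; lra. }
  assert (H2 : u ≼ N ⋅ (B ⊞ ⊟ m)).
  { apply rle_trans with (1 := Hk). apply scal_mono_t; auto. unfold N; lra. }
  assert (H3 : u ≼ rzero V).
  { apply rle_trans with (N ⋅ ((A ⊞ ⊟ m) ⊓ (B ⊞ ⊟ m))).
    apply rle_trans with ((N ⋅ (A ⊞ ⊟ m)) ⊓ (N ⋅ (B ⊞ ⊟ m))). apply meet_glb'; auto.
    apply meet_scal_le. unfold N; lra.
    rewrite meet_add. unfold m. rewrite radd_opp, scal_v0. apply rle_refl. }
  apply (sm_zero_all M V u s Hs Hmax). apply rle_antisym; auto.
  destruct (Hb y). eapply rle_trans; eauto.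
Qed.

Lemma transfer (M : PseudoMV) (V : RieszSpace) (u : V) (s1 s2 : M -> V) :
  state_morphism M V u s1 -> state_morphism M V u s2 ->
  (forall x, Ker M V s1 x <-> Ker M V s2 x) ->
  forall y z, s1 y ≼ s1 z -> s2 y ≼ s2 z.
Proof.
  intros H1 H2 HK y z H. apply w_zero_iff. rewrite <- (sm_w M V u s2 H2).
  apply HK. unfold Ker. rewrite (sm_w M V u s1 H1). apply w_zero_iff; auto.
Qed.

Lemma f_form (V : RieszSpace) (u a : V) :
  ⊟ ((u ⊞ ⊟ a) ⊞ (u ⊞ ⊟ a)) ⊞ u = (a ⊞ a) ⊞ ⊟ u.
Proof.
  rewrite !opp_add, !opp_opp, swap4.
  rewrite (radd_comm V (⊟ u ⊞ ⊟ u) (a ⊞ a)), <- radd_assoc, <- (radd_assoc V (⊟ u) (⊟ u) u).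
  rewrite addNl, radd_0. auto.
Qed.

Lemma diff1 (V : RieszSpace) (a b : V) : (a ⊞ a) ⊞ ⊟ (b ⊞ b) = (a ⊞ ⊟ b) ⊞ (a ⊞ ⊟ b).
Proof. rewrite opp_add, swap4. auto. Qed.

Lemma diff2 (V : RieszSpace) (u a b : V) :
  ((a ⊞ a) ⊞ ⊟ u) ⊞ ⊟ ((b ⊞ b) ⊞ ⊟ u) = (a ⊞ ⊟ b) ⊞ (a ⊞ ⊟ b).
Proof. rewrite (opp_add V (b ⊞ b)), opp_opp, swap4, addNl, radd_0. apply diff1. Qed.

Definition sq (M : PseudoMV) (x : M) : M := ptilde M (poplus M (pminus M x) (pminus M x)).

Lemma sm_sq (M : PseudoMV) (V : RieszSpace) (u : V) (s : M -> V) :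
  state_morphism M V u s -> forall x, s (pminus M x) ≼ s x ->
  s (sq M x) = (s x ⊞ s x) ⊞ ⊟ u.
Proof.
  intros (Hb & Ho & Hm & Ht & H0 & H1) x H. unfold sq. rewrite Ht, Ho, Hm. unfold rsub.
  rewrite Hm in H. unfold rsub in H.
  rewrite meet_eql. apply f_form.
  apply rle_trans with (s x ⊞ (u ⊞ ⊟ s x)). apply rle_add; auto.
  rewrite radd_comm, addNKr. apply rle_refl.
Qed.

Lemma sm_dbl (M : PseudoMV) (V : RieszSpace) (u : V) (s : M -> V) :
  state_morphism M V u s -> forall x, s x ≼ s (pminus M x) ->
  s (poplus M x x) = s x ⊞ s x.
Proof.
  intros (Hb & Ho & Hm & Ht & H0 & H1) x H. rewrite Ho. rewrite Hm in H. unfold rsub in H.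
  rewrite meet_eql; auto.
  apply rle_trans with ((u ⊞ ⊟ s x) ⊞ s x). apply rle_add; auto.
  rewrite addNKr. apply rle_refl.
Qed.

Lemma key (M : PseudoMV) (V : RieszSpace) (u : V) (s1 s2 : M -> V) :
  state_morphism M V u s1 -> state_morphism M V u s2 ->
  (forall y z, s1 y ≼ s1 z \/ s1 z ≼ s1 y) ->
  (forall y z, s1 y ≼ s1 z -> s2 y ≼ s2 z) ->
  forall k x, (2 ^ k) ⋅ (s1 x ⊞ ⊟ s2 x) ≼ u.
Proof.
  intros H1 H2 Hlin Htr k. induction k as [|k IH]; intro x.
  - simpl. rewrite rscal_1. rewrite <- (radd_0 V u). apply le_add2.
    apply (proj1 H1 x). rewrite <- opp0. apply le_opp. apply (proj1 H2 x).
  - replace (2 ^ S k) with (2 ^ k * 2) by (simpl; ring). rewrite <- rscal_assoc, scal2.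
    destruct (Hlin (pminus M x) x) as [Hc | Hc].
    + specialize (IH (sq M x)). rewrite (sm_sq M V u s1 H1 x Hc) in IH.
      rewrite (sm_sq M V u s2 H2 x (Htr _ _ Hc)) in IH. rewrite diff2 in IH. auto.
    + specialize (IH (poplus M x x)). rewrite (sm_dbl M V u s1 H1 x Hc) in IH.
      rewrite (sm_dbl M V u s2 H2 x (Htr _ _ Hc)) in IH. rewrite diff1 in IH. auto.
Qed.

Lemma pow2_ge (n : nat) : 1 <= 2 ^ n /\ INR n <= 2 ^ n.
Proof. induction n as [|n IH]. simpl; lra. rewrite S_INR. simpl. lra. Qed.

Lemma div01 (a b : R) : 0 <= a <= b -> 1 <= b -> 0 <= a / b <= 1.
Proof. intros Ha Hb. assert (Hi : 0 < / b) by (apply Rinv_0_lt_compat; lra). split.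
  unfold Rdiv. apply Rmult_le_pos; lra.
  unfold Rdiv. rewrite <- (Rinv_r b) by lra. apply Rmult_le_compat_r; lra. Qed.

Lemma half (M : PseudoMV) (V : RieszSpace) (u : V) (s1 s2 : M -> V) :
  archimedean V ->
  state_morphism M V u s1 -> state_morphism M V u s2 ->
  is_maximal_ideal M (Ker M V s1) ->
  (forall x, Ker M V s1 x <-> Ker M V s2 x) ->
  forall x, s1 x ≼ s2 x.
Proof.
  intros Har H1 H2 Hm1 HK x.
  assert (Hk := key M V u s1 s2 H1 H2 (sm_linear M V u s1 H1 Hm1) (transfer M V u s1 s2 H1 H2 HK)).
  assert (Hd : s1 x ⊞ ⊟ s2 x ≼ rzero V).
  { apply Har with (b := u). intros n _.
    destruct (pow2_ge n) as [Hp Hn].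
    replace (INR n) with ((INR n / 2 ^ n) * 2 ^ n) by (field; lra).
    rewrite <- rscal_assoc. apply rle_trans with ((INR n / 2 ^ n) ⋅ u).
    - apply scal_le. apply div01; auto. split; auto. apply pos_INR. apply Hk.
    - apply scal_le1. apply div01; auto. split; auto. apply pos_INR.
      destruct (proj1 H1 x). eapply rle_trans; eauto. }
  apply (le_add2r V _ _ (s2 x)) in Hd. rewrite addNKr, add0l in Hd. auto.
Qed.

Theorem theorem3p11 (V : RieszSpace) (u : V) (M : PseudoMV) (s1 s2 : M -> V) :
  strong_unit V u -> archimedean V ->
  state_morphism M V u s1 -> state_morphism M V u s2 ->
  is_maximal_ideal M (Ker M V s1) -> is_maximal_ideal M (Ker M V s2) ->
  (forall x, Ker M V s1 x <-> Ker M V s2 x) ->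
  s1 = s2.
Proof.
  intros _ Har H1 H2 Hm1 Hm2 HK. apply functional_extensionality. intro x.
  apply rle_antisym.
  - apply (half M V u s1 s2); auto.
  - apply (half M V u s2 s1); auto. intro y. split; apply HK.
Qed.
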